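(* Let $q$ be a prime power, $t\ge1$, $F=\mathbb{F}_{q^t}$, $B=\mathbb{F}_q$, and let $A=F$, so $n=|F|=q^t$. Suppose $r=n-k=q^s$ for some $s\in\{1,\dots,t\}$. Then any linear repair scheme over $B$ for a single erased symbol of the Reed-Solomon code $\mathrm{RS}(A,k)$ over $F$ requires a bandwidth of at least $(n-1)(t-s)$ sub-symbols over $B$.
   Context: $\mathrm{RS}(A,k)=\{(f(\alpha))_{\alpha\in A} : f\in F[x],\ \deg f<k\}$, with the symbol $f(\alpha)$ stored at node $\alpha$. A linear repair scheme over $B$ for the erased symbol $f(\alpha^* )$ is one in which each node $\alpha\neq\alpha^*$ sends $b_\alpha$ $B$-linear functions (sub-symbols over $B$) of its stored symbol, from which $f(\alpha^* )$ is recovered $B$-linearly; its bandwidth is $\sum_{\alpha\ne\alpha^*} b_\alpha$ sub-symbols. Equivalently, it corresponds to $t$ polynomials $g_1,\dots,g_t\in F[x]$ of degree at most $r-1$ with $\mathrm{rank}_B\{g_i(\alpha^* )\}_{i}=t$, the bandwidth being $\sum_{\alpha\neq\alpha^*}\mathrm{rank}_B\{g_i(\alpha)\}_i$. *)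

(* Defs.v *)
From HB Require Import structures.
From mathcomp Require Import all_boot all_order all_algebra all_field.
Set Implicit Arguments. Unset Strict Implicit. Unset Printing Implicit Defensive.
Import GRing.Theory.
Local Open Scope ring_scope.

(* Base field B = F_q (any finite field), F a finite-dimensional extension of B
   (hence F = F_{q^t} with q = #|B|, t = \dim {:F}).  The evaluation set is A = F. *)

(* A linear repair scheme over B for the erased symbol f(astar) of RS(F,k):
   the scheme sends N sub-symbols in total; sub-symbol j is sent by node
   [node j] (which must differ from astar) and equals [mu j] applied to the
   symbol f(node j) stored there, where [mu j] is a B-linear functional F -> B.  Its bandwidth is N = sum_alpha b_alpha, where
   b_alpha = #{ j | node j = alpha }. *)
Definition is_linear_repair_scheme (B : fieldType) (F : fieldExtType B)
    (k : nat) (astar : F) (N : nat) (node : 'I_N -> F)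
    (mu : 'I_N -> {linear F -> B^o}) (Rec : {linear 'rV[B]_N -> F}) : Prop :=
  (forall j, node j != astar) /\
  (forall f : {poly F}, (size f <= k)%N ->
     Rec (\row_j (mu j (f.[node j]) : B)) = f.[astar]).

(* Main.v *)
Require Import Defs.
From HB Require Import structures.
From mathcomp Require Import all_boot all_order all_algebra all_field.
From mathcomp Require Import mxabelem zify.
Local Open Scope ring_scope.
Import GRing.Theory.

Lemma convex_pow (q e x : nat) : (2 <= q)%N ->
  (q ^ e.+1 + x * (q ^ e * (q - 1)) <= q ^ x + e.+1 * (q ^ e * (q - 1)))%N.
Proof.
move=> q2.
have qe1 : (1 <= q ^ e)%N by rewrite expn_gt0; lia.
have E2 : (q ^ e.+1 = q * q ^ e)%N := expnS _ _.
rewrite E2.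
case: (leqP e.+1 x) => hx.
- rewrite -(subnKC hx); set m := (x - e.+1)%N; clearbody m.
  have: (q * q ^ e + m * (q ^ e * (q - 1)) <= q ^ (e.+1 + m))%N.
    elim: m => [|m IH]; first by rewrite addn0 mul0n addn0 E2.
    have E1 : (q ^ (e.+1 + m.+1) = q * q ^ (e.+1 + m))%N by rewrite addnS expnS.
    rewrite E1.
    have h1 : (q ^ e <= q ^ (e.+1 + m))%N by rewrite leq_exp2l; lia.
    move: IH h1; set A := (q ^ (e.+1 + m))%N; set P := (q ^ e)%N => IH h1.
    nia.
  set P := (q ^ e)%N; set Q := (q ^ (e.+1 + m))%N. nia.
- have h1 : (q ^ x <= q ^ e)%N by rewrite leq_exp2l; lia.
  have h0 : (1 <= q ^ x)%N by rewrite expn_gt0; lia.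
  case: (eqVneq x e) => [->|hne].
    set P := (q ^ e)%N. nia.
  move: h1 h0 qe1; set P := (q ^ e)%N; set Q := (q ^ x)%N => h1 h0 qe1.
  have hxe : (x + 2 <= e.+1)%N by lia.
  have H1 : ((x + 2) * (P * (q - 1)) <= e.+1 * (P * (q - 1)))%N by rewrite leq_mul2r hxe orbT.
  have H2 : (q * P <= 2 * (P * (q - 1)))%N by nia.
  nia.
Qed.

Import VectorInternalTheory.

Theorem corollary1 (B : finFieldType) (F : fieldExtType B) (s : nat)
    (hs1 : (1 <= s)%N) (hst : (s <= \dim {:F})%N)
    (astar : F) (N : nat) (node : 'I_N -> F)
    (mu : 'I_N -> {linear F -> B^o}) (Rec : {linear 'rV[B]_N -> F}) :
  let q := #|B| in
  let t := \dim {:F} in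
  let n := (q ^ t)%N in
  let k := (n - q ^ s)%N in
  is_linear_repair_scheme k astar node mu Rec ->
  ((n - 1) * (t - s) <= N)%N.
Proof.
move=> q t n k; rewrite {}/k {}/n {}/t {}/q => -[hnode hrec].
rewrite dimvf in hst hrec *.
set d := dim F in hst hrec *.
have q2 : (1 < #|B|)%N := card_finNzRing_gt1 B.
have v2rK : cancel (@VectorInternalTheory.v2r B F) r2v := @VectorInternalTheory.v2rK B F.
have r2vK : cancel (@VectorInternalTheory.r2v B F) v2r := @VectorInternalTheory.r2vK B F.
pose th (w : 'rV[B]_d) (x : F) : B := (v2r x *m w^T) 0 0.
pose h j w := th w (Rec (delta_mx 0 j)).
have thRec : forall w c, th w (Rec c) = \sum_j c 0 j * h j w.
  move=> w c; rewrite {1}(row_sum_delta c) linear_sum /th linear_sum.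
  rewrite mulmx_suml summxE; apply: eq_bigr => j _.
  by rewrite linearZ /= linearZ /= -scalemxAl mxE.
pose K (a : F) := [set w : 'rV[B]_d | [forall j, (node j == a) ==> (h j w == 0)]].
pose b (a : F) := #|[set j | node j == a]|.
have cardK : forall a, (#|B| ^ (d - b a) <= #|K a|)%N.
  move=> a; set P := [set j | node j == a].
  pose M := \matrix_(i < d, l < #|P|) v2r (Rec (delta_mx 0 (enum_val l))) 0 i.
  have -> : K a = rowg (kermx M).
    apply/setP => w; rewrite inE mem_rowg sub_kermx; apply/forallP/eqP.
    - move=> H; apply/rowP => l; rewrite !mxE.
      have := H (enum_val l); have := enum_valP l; rewrite inE => -> /= /eqP.
      rewrite /h /th mxE => E; rewrite -[RHS]E; apply: eq_bigr => i _; by rewrite !mxE mulrC.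
    - move=> H j; apply/implyP => Hj.
      have jP : j \in P by rewrite inE.
      move/rowP: H => /(_ (enum_rank_in jP j)).
      rewrite /M !mxE. under eq_bigr do rewrite mxE (enum_rankK_in jP jP). move=> E.
      apply/eqP; rewrite /h /th mxE -[RHS]E; apply: eq_bigr => i _; by rewrite !mxE mulrC.
  rewrite card_rowg mxrank_ker leq_exp2l //; apply: leq_sub2l; exact: rank_leq_col.
pose C := [set u : 'rV[B]_d | (@r2v B F u) != astar].
have cardC : #|C| = (#|B| ^ d - 1)%N.
  have -> : C = [set~ v2r astar].
    by apply/setP => u; rewrite !inE (can2_eq r2vK v2rK).
  by rewrite cardsC1 card_mx mul1n subn1.
have core : forall w : 'rV[B]_d, w != 0 ->
    (#|[set u in C | w \in K ((@r2v B F u))]| <= #|B| ^ s - 1)%N.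
  move=> w w0; set Z := [set u in C | w \in K ((@r2v B F u))].
  rewrite leqNgt; apply/negP => HZ.
  pose O := C :\: Z.
  have cardO : (#|O| + #|Z| = #|B| ^ d - 1)%N.
    rewrite -cardC -(cardsID Z C) addnC; congr (_ + _)%N.
    by rewrite (setIidPr _) //; apply/subsetP => u; rewrite inE => /andP[].
  pose P := \prod_(u <- enum O) ('X - ((@r2v B F u))%:P).
  have sP : size P = #|O|.+1 by rewrite size_prod_XsubC cardE.
  have rootP : forall u, u \in O -> P.[(@r2v B F u)] = 0.
    move=> u uO; rewrite /P horner_prod (big_rem u) ?mem_enum //=.
    by rewrite hornerXsubC subrr mul0r.
  have Pa : P.[astar] != 0.
    rewrite /P horner_prod prodf_seq_neq0; apply/allP => u.
    rewrite mem_enum !inE => /andP[_ uC] /=.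
    by rewrite hornerXsubC subr_eq0 eq_sym.
  have [i wi] : exists i, w 0 i != 0.
    case: (pickP (fun i => w 0 i != 0)) => [i wi | H]; first by exists i.
    case/eqP: w0; apply/rowP => i; have := H i; rewrite mxE => /negbFE/eqP //.
  pose y : F := @r2v B F (delta_mx 0 i).
  have thy : th w y = w 0 i by rewrite /th /y r2vK -rowE !mxE.
  pose f := (y / P.[astar]) *: P.
  have sf : (size f <= #|B| ^ d - #|B| ^ s)%N.
    apply: leq_trans (size_scale_leq _ _) _; rewrite sP. lia.
  have := hrec f sf; rewrite hornerZ divfK // => E.
  have : th w y = 0.
    rewrite -E thRec big1 // => j _; rewrite mxE.
    case: (boolP (v2r (node j) \in Z)) => HZj.
    - move: HZj; rewrite !inE v2rK => /andP[_] /forallP /(_ j).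
      by rewrite eqxx /= => /eqP ->; rewrite mulr0.
    - have Oj : v2r (node j) \in O by rewrite in_setD HZj inE v2rK hnode.
      by have := rootP _ Oj; rewrite v2rK => Pj; rewrite hornerZ Pj mulr0 linear0 mul0r.
  by rewrite thy; apply/eqP.
have K0 : forall a, 0 \in K a.
  move=> a; rewrite inE; apply/forallP => j; apply/implyP => _.
  by rewrite /h /th trmx0 mulmx0 mxE.
have E1 : (\sum_(u in C) #|K (@r2v B F u)| =
           \sum_(u in C) #|K (@r2v B F u) :\ 0%R| + #|C|)%N.
  rewrite -sum1_card -big_split /=; apply: eq_bigr => u _.
  by rewrite (cardsD1 (0 : 'rV[B]_d)) K0 addnC.
have E2 : (\sum_(u in C) #|K (@r2v B F u) :\ 0%R| <= (#|B| ^ d - 1) * (#|B| ^ s - 1))%N.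
  under eq_bigr do rewrite -sum1_card big_mkcond /=.
  rewrite exchange_big /= (bigD1 (0 : 'rV[B]_d)) //= big1 ?add0n; last first.
    by move=> u _; rewrite setD11.
  apply: (@leq_trans (\sum_(w in [set~ (0%R : 'rV[B]_d)]) (#|B| ^ s - 1))%N); last first.
    by rewrite sum_nat_const cardsC1 card_mx mul1n -subn1.
  rewrite big_mkcond [X in (_ <= X)%N]big_mkcond /=; apply: leq_sum => w _.
  rewrite !inE; case: eqP => [_|/eqP w0] //=.
  apply: leq_trans (core w w0).
  rewrite -sum1_card big_mkcond [X in (_ <= X)%N]big_mkcond /=; apply: leq_sum => u _.
  rewrite !inE w0 /=; do !case: ifP => //.
have sumK : (\sum_(u in C) #|K (@r2v B F u)| <= (#|B| ^ d - 1) * #|B| ^ s)%N.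
  rewrite E1 cardC.
  have qs : (1 <= #|B| ^ s)%N by rewrite expn_gt0; lia.
  move: E2; set m := (#|B| ^ d - 1)%N; set Q := (#|B| ^ s)%N; set S := (\sum_(u in C) _)%N.
  nia.
have sumb : (\sum_(u in C) b (@r2v B F u) <= N)%N.
  apply: (@leq_trans (\sum_u b (@r2v B F u))%N).
    rewrite [X in (X <= _)%N]big_mkcond /=; apply: leq_sum => u _; by case: ifP.
  have -> : (\sum_u b (@r2v B F u) = \sum_u \sum_j (if node j == @r2v B F u then 1 else 0))%N.
    apply: eq_bigr => u _; by rewrite /b -sum1dep_card big_mkcond.
  rewrite exchange_big /=.
  rewrite (@eq_bigr _ _ _ _ _ _ _ (fun _ => 1%N)).
    by rewrite sum1_card card_ord.
  move=> j _; rewrite (bigD1 (v2r (node j))) //= v2rK eqxx big1 ?addn0 // => u ne.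
  by rewrite eq_sym (can2_eq r2vK v2rK) (negbTE ne).
pose X u := (d - b (@r2v B F u))%N.
set q := #|B| in q2 cardC cardK sumK *.
set m := (q ^ d - 1)%N in cardC sumK *.
have S1 : (\sum_(u in C) q ^ X u <= m * q ^ s)%N.
  apply: leq_trans sumK; apply: leq_sum => u _; exact: cardK.
pose D := (q ^ s.-1 * (q - 1))%N.
have Dpos : (0 < D)%N by rewrite muln_gt0 expn_gt0; apply/andP; split; lia.
have cvx : (\sum_(u in C) (q ^ s + X u * D) <= \sum_(u in C) (q ^ X u + s * D))%N.
  apply: leq_sum => u _; have := @convex_pow q (s.-1) (X u) q2; by rewrite prednK.
rewrite !big_split /= !sum_nat_const -big_distrl /= cardC in cvx.
have SX : (\sum_(u in C) X u <= m * s)%N.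
  rewrite -(@leq_pmul2r D) //.
  move: cvx S1; set A := (\sum_(u in C) q ^ X u)%N; set SX := (\sum_(u in C) X u)%N.
  nia.
have Sd : (\sum_(u in C) (d - X u) + \sum_(u in C) X u = m * d)%N.
  rewrite -big_split /=.
  rewrite (@eq_bigr _ _ _ _ _ _ _ (fun _ => d)); first by rewrite sum_nat_const cardC.
  by move=> u _; rewrite subnK // /X leq_subr.
have Sb : (\sum_(u in C) (d - X u) <= \sum_(u in C) b (@r2v B F u))%N.
  apply: leq_sum => u _; rewrite /X; lia.
rewrite mulnBr.
move: Sd Sb SX sumb; set T1 := (\sum_(u in C) (d - X u))%N; set T2 := (\sum_(u in C) X u)%N.
set T3 := (\sum_(u in C) b _)%N. lia.
Qed.
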